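(* Let $\lambda=(\lambda_1\ge\dots\ge\lambda_n)$ be a singular integral dominant weight (integers with $\lambda_j=\lambda_{j+1}$ for some $j$), and let $\lambda'=(\lambda'_1>\dots>\lambda'_n)$ be any regular integral dominant weight. Then the normal fan of $GT_{\lambda'}$ refines the normal fan of $GT_\lambda$.
   Context: For an integral dominant weight $\nu$, $GT_\nu\subset\mathbb R^{n(n+1)/2}$, with coordinates $A_{i,j}$ for $0\le i\le n-1$, $1\le j\le n-i$, is the polytope defined by $A_{0,j}=\nu_j$ and $A_{i,j}\ge A_{i+1,j}\ge A_{i,j+1}$ for $0\le i\le n-2$, $1\le j\le n-i-1$. The normal fan of a polytope $P$ is the collection of cones $\{c:\ \langle c,\cdot\rangle \text{ is maximized on } P \text{ along a given face}\}$ in the dual space; one fan refines another if each cone of the first is contained in a cone of the second. *)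

(* Defs.v *)
From HB Require Import structures.
From mathcomp Require Import all_boot all_order all_algebra.
From mathcomp Require Import classical_sets reals.
Set Implicit Arguments. Unset Strict Implicit. Unset Printing Implicit Defensive.
Import Order.TTheory GRing.Theory Num.Theory.
Local Open Scope ring_scope.
Local Open Scope classical_set_scope.

(* Index set of the Gelfand-Tsetlin coordinates A_{i,j}, 0 <= i <= n-1,
   1 <= j <= n-i.  The pair (i, j0) of ordinals encodes A_{i, j0+1};
   the constraint i + j0 < n is j0+1 <= n-i. *)
Definition gtidx (n : nat) := {p : 'I_n * 'I_n | (p.1 : nat) + p.2 < n}%N.

Definition gtpt (R : realType) (n : nat) := gtidx n -> R.

(* A_{i,j} with the paper's indexing (j is 1-based); 0 outside the index set. *)
Definition coord (R : realType) (n : nat) (A : gtpt R n) (i j : nat) : R :=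
  if [pick k : gtidx n | ((val k).1 == i :> nat) && ((val k).2.+1 == j)%N]
  is Some k then A k else 0.

(* Weights are ν : nat -> int with components ν_1, ..., ν_n (1-based). *)
Definition dominant (n : nat) (nu : nat -> int) : Prop :=
  forall j : nat, (1 <= j < n)%N -> nu j.+1 <= nu j.
Definition regular (n : nat) (nu : nat -> int) : Prop :=
  forall j : nat, (1 <= j < n)%N -> nu j.+1 < nu j.
Definition singular (n : nat) (nu : nat -> int) : Prop :=
  exists j : nat, (1 <= j < n)%N /\ nu j = nu j.+1.

Definition GT (R : realType) (n : nat) (nu : nat -> int) : set (gtpt R n) :=
  [set A | (forall j : nat, (1 <= j <= n)%N -> coord A 0 j = (nu j)%:~R) /\
           (forall i j : nat, (i <= n - 2)%N -> (1 <= j <= n - i - 1)%N ->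
               coord A i.+1 j <= coord A i j /\ coord A i j.+1 <= coord A i.+1 j)].

Definition pairing (R : realType) (n : nat) (c A : gtpt R n) : R :=
  \sum_(k : gtidx n) c k * A k.

Definition argmax (R : realType) (n : nat) (P : set (gtpt R n)) (c : gtpt R n)
  : set (gtpt R n) :=
  [set x | P x /\ forall y, P y -> pairing c y <= pairing c x].

Definition face (R : realType) (n : nat) (P F : set (gtpt R n)) : Prop :=
  exists c, F = argmax P c.

Definition normal_cone (R : realType) (n : nat) (P F : set (gtpt R n))
  : set (gtpt R n) :=
  [set c | F `<=` argmax P c].

Definition normal_fan (R : realType) (n : nat) (P : set (gtpt R n))
  : set (set (gtpt R n)) :=
  [set C | exists F, face P F /\ C = normal_cone P F].

Definition refines (T : Type) (S1 S2 : set (set T)) : Prop :=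
  forall C, S1 C -> exists D, S2 D /\ C `<=` D.

(* Main.v *)
Require Import Defs.
From HB Require Import structures.
From mathcomp Require Import all_boot all_order all_algebra.
From mathcomp Require Import classical_sets reals.
From mathcomp Require Import all_classical all_reals all_analysis.
From mathcomp Require Import zify ring lra.
Require Import Defs.
Set Implicit Arguments. Unset Strict Implicit. Unset Printing Implicit Defensive.
Import Order.TTheory GRing.Theory Num.Theory.
Import numFieldNormedType.Exports numFieldTopology.Exports.
Local Open Scope ring_scope.
Local Open Scope classical_set_scope.

Definition addp (R : realType) n (A B : gtpt R n) : gtpt R n := fun k => A k + B k.
Definition scalep (R : realType) n (t : R) (A : gtpt R n) : gtpt R n := fun k => t * A k.

Definition rmax (R : realType) (a b : R) := if a <= b then b else a.
Lemma rmaxP (R : realType) (a b : R) :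
  [/\ a <= rmax a b, b <= rmax a b & rmax a b = a \/ rmax a b = b].
Proof.
rewrite /rmax; case: ifP => h; first by split; rewrite ?lexx //; right.
have := le_total a b; rewrite h /= => hb; split; rewrite ?lexx //; by left.
Qed.

Definition mkp (R : realType) n (f : nat -> nat -> R) : gtpt R n :=
  fun k => f (val k).1 (val k).2.+1.

Lemma coord_mk (R : realType) n (f : nat -> nat -> R) i j :
  (i < n)%N -> (0 < j)%N -> (i + j <= n)%N -> coord (mkp (n:=n) f) i j = f i j.
Proof.
move=> hi hj hij; rewrite /coord; case: pickP => [k /andP[/eqP e1 /eqP e2]|H].
  by rewrite /mkp e1 e2.
have hj' : (j.-1 < n)%N by lia.
have hk : ((Ordinal hi : nat) + (Ordinal hj' : nat) < n)%N by rewrite /=; lia.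
have := H (exist _ (Ordinal hi, Ordinal hj') hk); rewrite /= eqxx /= prednK //.
by rewrite eqxx.
Qed.

Lemma coord_val (R : realType) n (A : gtpt R n) (k : gtidx n) :
  coord A (val k).1 (val k).2.+1 = A k.
Proof.
rewrite /coord; case: pickP => [k' /andP[/eqP e1 /eqP e2]|H]; last first.
  by have := H k; rewrite !eqxx.
have -> : k' = k => //; apply: val_inj; move: e1 e2.
case: (val k') => a b; case: (val k) => c d /= e1 [e2].
by congr pair; apply: val_inj.
Qed.

Lemma coordD (R : realType) n (A B : gtpt R n) i j :
  coord (addp A B) i j = coord A i j + coord B i j.
Proof. by rewrite /coord; case: pickP => //; rewrite addr0. Qed.

Lemma coordZ (R : realType) n t (A : gtpt R n) i j :
  coord (scalep t A) i j = t * coord A i j.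
Proof. by rewrite /coord; case: pickP => //; rewrite mulr0. Qed.

Definition GTf (R : realType) n (nu : nat -> int) (a : nat -> nat -> R) : Prop :=
  (forall j, (1 <= j <= n)%N -> a 0%N j = (nu j)%:~R) /\
  (forall i j, (1 <= j)%N -> (i + j.+1 <= n)%N -> a i.+1 j <= a i j /\ a i j.+1 <= a i.+1 j).

Lemma GTE (R : realType) n nu (A : gtpt R n) : GT nu A <-> GTf n nu (coord A).
Proof.
split=> [[h0 h1]|[h0 h1]]; split => // i j.
  by move=> hj hij; apply: h1; lia.
by move=> hi /andP[hj1 hj2]; apply: h1; lia.
Qed.

Lemma GTf_ext (R : realType) n nu (a b : nat -> nat -> R) :
  (forall i j, (1 <= j)%N -> (i + j <= n)%N -> a i j = b i j) ->
  GTf n nu a -> GTf n nu b.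
Proof.
move=> e [h0 h1]; split.
  by move=> j hj; rewrite -e ?h0 //; lia.
move=> i j hj hij; rewrite -!e; [exact: h1| lia..].
Qed.

Lemma GT_mk (R : realType) n nu (f : nat -> nat -> R) :
  GTf n nu f -> GT nu (mkp (n:=n) f).
Proof.
move=> h; apply/GTE; apply: GTf_ext h => i j hj hij.
by rewrite coord_mk //; lia.
Qed.

Fixpoint xf (R : realType) (lam : nat -> int) (Z : nat -> nat -> R) (i : nat) : nat -> R :=
  match i with
  | 0%N => fun j => (lam j)%:~R
  | i'.+1 => fun j => rmax (xf lam Z i' j.+1) (Z i'.+1 j - (Z i' j - xf lam Z i' j))
  end.

Lemma decomp (R : realType) n (lam mu : nat -> int) (Z : nat -> nat -> R) :
  (forall j, (1 <= j)%N -> (j.+1 <= n)%N -> lam j.+1 <= lam j) ->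
  (forall j, (1 <= j)%N -> (j.+1 <= n)%N -> mu j.+1 <= mu j) ->
  (forall j, (1 <= j <= n)%N -> Z 0%N j = (lam j)%:~R + (mu j)%:~R) ->
  (forall i j, (1 <= j)%N -> (i + j.+1 <= n)%N -> Z i.+1 j <= Z i j /\ Z i j.+1 <= Z i.+1 j) ->
  GTf n lam (xf lam Z) /\ GTf n mu (fun i j => Z i j - xf lam Z i j).
Proof.
move=> Hl Hm H0 HZ.
pose x := xf lam Z; pose y := fun i j => Z i j - x i j.
pose mono i := forall j, (1 <= j)%N -> (i + j.+1 <= n)%N -> x i j.+1 <= x i j /\ y i j.+1 <= y i j.
have mono0 : mono 0%N.
  move=> j hj hjn; rewrite /y /x /= !H0; try lia.
  by rewrite !(addrC (lam _)%:~R) !addrK !ler_int; split; [apply: Hl|apply: Hm].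
have inter : forall i, mono i -> forall j, (1 <= j)%N -> (i + j.+1 <= n)%N ->
    [/\ x i.+1 j <= x i j, x i j.+1 <= x i.+1 j, y i.+1 j <= y i j & y i j.+1 <= y i.+1 j].
  move=> i hm j hj hij; have [h1 h2] := hm j hj hij; have [z1 z2] := HZ i j hj hij.
  move: h1 h2; rewrite /y /x /=.
  have [m1 m2 m3] := rmaxP (xf lam Z i j.+1) (Z i.+1 j - (Z i j - xf lam Z i j)).
  move: m1 m2; case: m3 => -> m1 m2 h1 h2; split; lra.
have mono_all : forall i, mono i.
  elim=> // i IH j hj hij.
  have [a1 a2 a3 a4] := inter i IH j.+1 isT ltac:(lia).
  have [b1 b2 b3 b4] := inter i IH j hj ltac:(lia).
  split; [exact: le_trans a1 b2|exact: le_trans a3 b4].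
split; split => //.
- by move=> i j hj hij; have [] := inter i (mono_all i) j hj hij.
- by move=> j hj /=; rewrite H0 //; ring.
- by move=> i j hj hij; have [] := inter i (mono_all i) j hj hij.
Qed.

Module GTtop.
Import ArrowAsProduct.
Section T.
Variable (R : realType) (n : nat).
Local Notation V := (gtidx n -> R).

Lemma closed_all (I : Type) (P : I -> set V) :
  (forall i, closed (P i)) -> closed [set x | forall i, P i x].
Proof.
move=> h p clp i; apply: (h i) => B nB.
by have [x [hx Bx]] := clp B nB; exists x; split => //; exact: hx.
Qed.

Lemma closed_imp (Q : Prop) (S : set V) : (Q -> closed S) -> closed [set x | Q -> S x].
Proof.
move=> h p clp q; apply: (h q) => B nB.
by have [x [hx Bx]] := clp B nB; exists x; split => //; exact: hx.
Qed.

Lemma coord_cont i j : continuous (fun A : V => coord A i j).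
Proof.
rewrite /coord; case: pickP => [k _|_]; last exact: cst_continuous.
exact: (@proj_continuous _ (fun _ => R) k).
Qed.

Lemma closed_le_fun (f g : V -> R) : continuous f -> continuous g ->
  closed [set x | f x <= g x].
Proof.
move=> cf cg.
rewrite (_ : [set x | f x <= g x] = (fun x => f x - g x) @^-1` [set r | r <= 0]).
  apply: (@preimage_closed _ _ (fun x : V => f x - g x) [set r : R | r <= 0]).
  - by move=> x _; exact: (@cvgB R R^o _ _ _ f g (f x) (g x) (cf x) (cg x)).
  - exact: closed_le.
by rewrite predeqE => x /=; rewrite subr_le0.
Qed.

Lemma closed_eq_fun (f : V -> R) r : continuous f -> closed [set x | f x = r].
Proof.
move=> cf; apply: (@preimage_closed _ _ f [set x : R | x = r]).
  by move=> x _; exact: cf.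
exact: closed_eq.
Qed.

Lemma closedGT nu : closed (GT nu : set V).
Proof.
apply: closedI.
  apply: closed_all => j; apply: closed_imp => _; apply: closed_eq_fun; exact: coord_cont.
apply: closed_all => i; apply: closed_all => j; apply: closed_imp => _; apply: closed_imp => _.
by apply: closedI; apply: closed_le_fun; exact: coord_cont.
Qed.

Lemma sum_cont (c : V) (s : seq (gtidx n)) :
  continuous (fun A : V => \sum_(k <- s) c k * A k).
Proof.
elim: s => [|k s IH].
  have -> : (fun A : V => \sum_(k <- [::]) c k * A k) = fun=> 0.
    by apply: funext => A; rewrite big_nil.
  exact: cst_continuous.
have -> : (fun A : V => \sum_(k0 <- k :: s) c k0 * A k0) =
    (fun A : V => c k * A k + \sum_(k0 <- s) c k0 * A k0).
  by apply: funext => A; rewrite big_cons.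
move=> x.
have h1 : (fun A : V => c k * A k) @ x --> c k * x k.
  exact: (@cvgMl_tmp R _ _ _ (fun A : V => A k) (c k) (x k)
    (@proj_continuous _ (fun _ => R) k x)).
exact: (@cvgD R R^o _ _ _ (fun A : V => c k * A k) (fun A : V => \sum_(k0 <- s) c k0 * A k0) _ _ h1 (IH x)).
Qed.

Lemma pairing_cont (c : V) : continuous (fun A : V => pairing c A).
Proof. exact: sum_cont. Qed.

Lemma GT_bound nu A : GT nu A -> forall k : gtidx n,
  `[- (\sum_(j < n.+1) `|(nu j)%:~R : R|), \sum_(j < n.+1) `|(nu j)%:~R : R| ] (A k).
Proof.
set B := \sum_(j < n.+1) _.
move=> /GTE [h0 h1] k.
have hB : forall j, (j <= n)%N -> `|(nu j)%:~R : R| <= B.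
  move=> j hj; rewrite /B (bigD1 (Ordinal (hj : (j < n.+1)%N))) //=.
  by rewrite lerDl; apply: sumr_ge0 => i _; exact: normr_ge0.
have row : forall i j, (1 <= j)%N -> (i + j <= n)%N -> `|coord A i j| <= B.
  elim=> [|i IH] j hj hij; first by rewrite h0 ?hB //; lia.
  have [a1 a2] := h1 i j hj ltac:(lia).
  have := IH j hj ltac:(lia); have := IH j.+1 isT ltac:(lia).
  rewrite !ler_norml => /andP[b1 b2] /andP[b3 b4].
  apply/andP; split; [exact: le_trans b1 a2| exact: le_trans a1 b4].
rewrite /= in_itv /= -ler_norml -coord_val; apply: row => //.
by case: k => -[a b] /= hab; lia.
Qed.

Lemma GT_argmax (nu : nat -> int) :
  (forall j, (1 <= j)%N -> (j.+1 <= n)%N -> nu j.+1 <= nu j) ->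
  forall c : gtpt R n, exists z, argmax (GT nu) c z.
Proof.
move=> hd c.
set B := \sum_(j < n.+1) `|(nu j)%:~R : R|.
have ne : (GT nu : set V) !=set0.
  exists (mkp (n:=n) (fun i j => (nu (i + j)%N)%:~R : R)); apply: GT_mk; split.
    by move=> j _.
  move=> i j hj hij; rewrite addSn addnS lexx; split => //.
  by rewrite ler_int; apply: hd; lia.
have cpt : compact (GT nu : set V).
  apply: (@subclosed_compact _ (GT nu) [set f : V | forall k, `[- B, B] (f k)] (@closedGT nu)).
    exact: (@tychonoff (gtidx n) (fun _ => R) (fun _ => `[- B, B]) (fun _ => @segment_compact R (- B) B)).
  by move=> A hA k; exact: GT_bound hA k.
have cf : {within (GT nu : set V), continuous (fun A : V => pairing c A)}.
  by apply: continuous_subspaceT; exact: pairing_cont.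
have [z zin zmax] := compact_EVT_max ne cpt cf.
exists z; split; first by move: zin; rewrite inE.
by move=> y Py; apply: zmax; rewrite inE.
Qed.

End T.
End GTtop.
Import GTtop.

Lemma pairingD (R : realType) n (c A B : gtpt R n) :
  pairing c (addp A B) = pairing c A + pairing c B.
Proof. by rewrite /pairing -big_split; apply: eq_bigr => k _; rewrite /addp mulrDr. Qed.

Lemma pairingZ (R : realType) n (c A : gtpt R n) t :
  pairing c (scalep t A) = t * pairing c A.
Proof. by rewrite /pairing mulr_sumr; apply: eq_bigr => k _; rewrite /scalep mulrCA. Qed.
Lemma le_invmul (R : realType) (t a s : R) : 0 < t -> (a <= t^-1 * s) = (t * a <= s).
Proof. by move=> t0; rewrite -(ler_pM2l t0) mulrA mulfV ?mul1r // gt_eqF. Qed.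
Lemma refine_abs (R : realType) n (P Q P' : set (gtpt R n)) (t : R) : 0 < t ->
 (forall p q, P p -> Q q -> P' (scalep t^-1 (addp p q))) ->
 (forall z, P' z -> exists p q, [/\ P p, Q q & scalep t z = addp p q]) ->
 (forall c, exists z, argmax P' c z) ->
 refines (normal_fan P') (normal_fan P).
Proof.
move=> t0 Hadd Hdec Hne C [F [[c' ->] ->]].
exists (normal_cone P (argmax P c')); split.
  by exists (argmax P c'); split => //; exists c'.
move=> c Hc x1 [Px1 Mx1].
have [z [P'z Mz]] := Hne c'.
have [p [q [Pp Qq Ez]]] := Hdec z P'z.
have Ez' : t * pairing c' z = pairing c' p + pairing c' q.
  by rewrite -pairingZ Ez pairingD.
have Mq : forall q2, Q q2 -> pairing c' q2 <= pairing c' q.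
  move=> q2 Qq2; have := Mz _ (Hadd p q2 Pp Qq2).
  rewrite pairingZ pairingD -le_invmul ?invr_gt0 // invrK Ez' lerD2l //.
have Hw : argmax P' c' (scalep t^-1 (addp x1 q)).
  split; first exact: Hadd.
  move=> u P'u; have [p2 [q2 [Pp2 Qq2 Eu]]] := Hdec u P'u.
  rewrite pairingZ pairingD le_invmul // -pairingZ Eu pairingD.
  by apply: lerD; [apply: Mx1|apply: Mq].
have [_ Mw] := Hc _ Hw.
split => // x2 Px2; have := Mw _ (Hadd x2 q Px2 Qq).
by rewrite !pairingZ !pairingD ler_pM2l ?invr_gt0 // lerD2r.
Qed.

Lemma aux (a b c e : int) (t : nat) : b < a -> (`|c - e| < t)%N -> b *+ t - e <= a *+ t - c.
Proof.
move=> h1 hb.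
have h2 : c - e <= t%:Z.
  apply: le_trans (ler_norm (c - e)) _. have := ltnW hb; rewrite -lez_nat abszE; exact. 
have h3 : (t%:Z) <= (a - b) * t%:Z.
  have h4 : 1 <= a - b by rewrite lerBrDr addrC lezD1.
  have h0 : (0 <= t%:Z) by rewrite lez_nat.
  by have := ler_wpM2r h0 h4; rewrite mul1r.
have h5 := le_trans h2 h3.
rewrite mulrBl in h5.
rewrite -[b *+ t]mulr_natr -[a *+ t]mulr_natr natz.
move: h5; move: (a * t%:Z) (b * t%:Z) => A B.
lia.
Qed.

Theorem mainTheorem8 (R : realType) (n : nat) (lam lam' : nat -> int) :
  dominant n lam -> singular n lam -> regular n lam' ->
  refines (normal_fan (@GT R n lam')) (normal_fan (@GT R n lam)).
Proof.
move=> dl _ rl'.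
pose t : nat := (\sum_(j < n.+1) `|lam j - lam j.+1|%N).+1.
pose mu j := lam' j *+ t - lam j.
pose T : R := t%:R.
have T0 : 0 < T by rewrite ltr0n.
have muE : forall j, (mu j)%:~R = (lam' j)%:~R * T - (lam j)%:~R :> R.
  by move=> j; rewrite /mu rmorphB rmorphMn mulr_natr.
have dmu : forall j, (1 <= j)%N -> (j.+1 <= n)%N -> mu j.+1 <= mu j.
  move=> j hj hjn.
  have hb : (`|lam j - lam j.+1| < t)%N.
    rewrite ltnS (bigD1 (Ordinal (ltnW hjn : (j < n.+1)%N))) //=.
    exact: leq_addr.
  by rewrite /mu; apply: aux => //; apply: rl'; lia.
have dlam : forall j, (1 <= j)%N -> (j.+1 <= n)%N -> lam j.+1 <= lam j.
  by move=> j hj hjn; apply: dl; lia.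
apply: (@refine_abs R n (GT lam) (GT mu) (GT lam') T T0).
- move=> p q /GTE [p0 p1] /GTE [q0 q1]; apply/GTE.
  apply: (@GTf_ext R n lam' (fun i j => T^-1 * (coord p i j + coord q i j))).
    by move=> i j _ _; rewrite coordZ coordD.
  split.
    move=> j hj; rewrite p0 // q0 // muE addrC subrK mulrC mulfK //.
    by rewrite gt_eqF.
  move=> i j hj hij; have [a1 a2] := p1 i j hj hij; have [b1 b2] := q1 i j hj hij.
  by rewrite !ler_pM2l ?invr_gt0 //; split; apply: lerD.
- move=> z /GTE [z0 z1].
  pose Z i j := T * coord z i j.
  have [hx hy] := @decomp R n lam mu Z dlam dmu
    ltac:(by move=> j hj; rewrite /Z z0 // muE; ring)
    ltac:(by move=> i j hj hij; have [a1 a2] := z1 i j hj hij; rewrite /Z !ler_pM2l).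
  exists (mkp (n:=n) (xf lam Z)), (mkp (n:=n) (fun i j => Z i j - xf lam Z i j)).
  split; [exact: GT_mk|exact: GT_mk|].
  apply: funext => k; rewrite /scalep /addp /mkp /= -(coord_val z k) /Z.
  by rewrite addrC subrK.
- move=> c; apply: GT_argmax => j hj hjn.
  by apply: ltW; apply: rl'; lia.
Qed.
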